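(* Fix a protocol specification $(I,D,C)$ and a setting $(n,r,f)$ with $r\ge 2$, and suppose the setting is feasible, i.e. there exists a correct state machine. Let $\mathit{Sc}$ be a scenario that leads to a definite decision, with definite final-state vector $(d_1,\dots,d_n)\in D^n$. Let $M$ be any state machine whose execution on $\mathit{Sc}$ ends with process $i$ in final state $d_i$ for every $i$, and let $T$ be a set of transitions $(t,i,x)\mapsto y$ that are applied in this execution of $M$ on $\mathit{Sc}$ (meaning: in round $t$, process $i$ has input vector $x$ and $M(t,i,x)=y$), such that for each pair $(t,i)\in\{1,\dots,r\}\times\{1,\dots,n\}$, $T$ contains at most one transition with round $t$ and process ID $i$. Then there exists a correct state machine $M'$ with $M'(t,i,x)=y$ for every transition $(t,i,x)\mapsto y$ in $T$.
   Context: Model. There are $n$ processes with IDs $1,\dots,n$, running for $r$ synchronous rounds, with at most $f$ crash failures. There is a finite set $I$ of initial states, a finite set $D$ of decision states, a finite set $Q$ of non-final (intermediate) states, and a special symbol $L$ (''lost message'') not in any of these sets. A state machine is a function $M$ assigning to each round $t\in\{1,\dots,r\}$, process ID $i$, and input vector $x=(x_1,\dots,x_n)\in (I\cup Q\cup\{L\})^n$ a new state $M(t,i,x)$, which lies in $Q$ if $t<r$ and in $D$ if $t=r$. Scenarios. A scenario is a pair $\mathit{Sc}=(\mathit{Init},\mathit{Loss})$ with $\mathit{Init}\in I^n$ and $\mathit{Loss}\subseteq\{(j,i,t)\}$ (meaning the message from $j$ to $i$ in round $t$ is lost), consistent with at most $f$ crashes: there is a set $P$ of at most $f$ processes and a crash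 round $c_p$ for each $p\in P$ such that messages from processes not in $P$ are never lost, and for $p\in P$ messages from $p$ in rounds $t<c_p$ are never lost, all messages from $p$ in rounds $t>c_p$ are lost, and in round $c_p$ an arbitrary subset of $p$'s messages is lost. A process in $P$ is called crashed. Execution. Process $i$ starts in state $s_i^0=\mathit{Init}[i]$. In round $t=1,\dots,r$, every process broadcasts its current state; process $i$'s input vector is $x^t_i$ with $(x^t_i)_j=s_j^{t-1}$ if $(j,i,t)\notin\mathit{Loss}$ and $(x^t_i)_j=L$ otherwise; then $s_i^t=M(t,i,x_i^t)$. The final state of process $i$ is $s_i^r\in D$. Correctness. $C$ is a property of the scenario together with the final decision states; it depends only on $\mathit{Sc}$ and the final states (not on intermediate states). A state machine is correct if for every scenario consistent with the setting, its execution satisfies $C$. The setting is feasible if a correct state machine exists. A scenario $\mathit{Sc}$ leads to a definite decision if there is a vector $(d_1,\dots,d_n)\in D^n$ such that every correct state machine, executed on $\mathit{Sc}$, ends with process $i$ in state $d_i$ for all $i$. *)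

(* Defs.v *)
From mathcomp Require Import all_boot.
Set Implicit Arguments. Unset Strict Implicit. Unset Printing Implicit Defensive.

(* Processes 1..n are modelled by 'I_n (process i+1 <-> ordinal i).
   The state sets I (initial), Q (intermediate), D (decision) are finite
   types; the disjoint union I ∪ Q ∪ {L} is the inductive [sin I Q]. *)

Inductive sin (I Q : Type) : Type :=
  | SInit of I
  | SInt of Q
  | SLost.
Arguments SLost {I Q}.

Definition invec (n : nat) (I Q : Type) := {ffun 'I_n -> sin I Q}.

Definition machine (n : nat) (I D Q : Type) :=
  nat -> 'I_n -> invec n I Q -> (Q + D)%type.

Definition valid_machine (n r : nat) (I D Q : Type) (M : machine n I D Q) : Prop :=
  forall t i x, 1 <= t <= r ->
    (t < r -> exists q, M t i x = inl q) /\ (t = r -> exists d, M t i x = inr d).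

(* A scenario: initial states and the set of lost messages;
   loss j i t = true means the message from j to i in round t is lost. *)
Record scenario (n : nat) (I : Type) := Scenario {
  sc_init : {ffun 'I_n -> I};
  sc_loss : 'I_n -> 'I_n -> nat -> bool }.

(* Consistency with at most f crash failures (and rounds 1..r). *)
Definition consistent (n r f : nat) (I : Type) (Sc : scenario n I) : Prop :=
  exists (P : {set 'I_n}) (c : 'I_n -> nat),
    #|P| <= f /\
    (forall j i t, sc_loss Sc j i t -> [/\ 1 <= t <= r, j \in P & c j <= t]) /\
    (forall j i t, j \in P -> c j < t <= r -> sc_loss Sc j i t).

Definition in_vec (n : nat) (I Q : Type) (Sc : scenario n I) (t : nat)
    (s : 'I_n -> sin I Q) (i : 'I_n) : invec n I Q :=
  [ffun j => if sc_loss Sc j i t then SLost else s j].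

(* states after m rounds (meaningful for m < r; a decision state, which
   never occurs before round r in a valid machine, is mapped to SLost) *)
Fixpoint exec_st (n : nat) (I D Q : Type) (M : machine n I D Q)
    (Sc : scenario n I) (m : nat) : 'I_n -> sin I Q :=
  match m with
  | 0 => fun i => SInit Q (sc_init Sc i)
  | m'.+1 => fun i =>
      match M m'.+1 i (in_vec Sc m'.+1 (exec_st M Sc m') i) with
      | inl q => SInt I q
      | inr _ => SLost
      end
  end.

Definition exec_input (n : nat) (I D Q : Type) (M : machine n I D Q)
    (Sc : scenario n I) (t : nat) (i : 'I_n) : invec n I Q :=
  in_vec Sc t (exec_st M Sc t.-1) i.

Definition final_is (n r : nat) (I D Q : Type) (M : machine n I D Q)
    (Sc : scenario n I) (i : 'I_n) (d : D) : Prop :=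
  M r i (exec_input M Sc r i) = inr d.

Definition correct (n r f : nat) (I D Q : Type)
    (C : scenario n I -> {ffun 'I_n -> D} -> Prop) (M : machine n I D Q) : Prop :=
  valid_machine r M /\
  forall Sc : scenario n I, consistent r f Sc ->
    exists ds : {ffun 'I_n -> D}, (forall i, final_is r M Sc i (ds i)) /\ C Sc ds.

Definition feasible (n r f : nat) (I D Q : Type)
    (C : scenario n I -> {ffun 'I_n -> D} -> Prop) : Prop :=
  exists M : machine n I D Q, correct r f C M.

Definition definite_decision (n r f : nat) (I D Q : Type)
    (C : scenario n I -> {ffun 'I_n -> D} -> Prop) (Sc : scenario n I)
    (ds : {ffun 'I_n -> D}) : Prop :=
  forall M : machine n I D Q, correct r f C M -> forall i, final_is r M Sc i (ds i).

Record transition (n : nat) (I D Q : Type) := Transition {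
  tr_round : nat;
  tr_proc : 'I_n;
  tr_input : invec n I Q;
  tr_output : (Q + D)%type }.

Definition applied (n r : nat) (I D Q : Type) (M : machine n I D Q)
    (Sc : scenario n I) (tr : transition n I D Q) : Prop :=
  [/\ 1 <= tr_round tr <= r,
      tr_input tr = exec_input M Sc (tr_round tr) (tr_proc tr)
    & M (tr_round tr) (tr_proc tr) (tr_input tr) = tr_output tr].

(* Main.v *)
Require Import Defs.
From mathcomp Require Import all_boot.
Set Implicit Arguments. Unset Strict Implicit. Unset Printing Implicit Defensive.

Definition swapf (Q : eqType) (a b q : Q) : Q :=
  if q == a then b else if q == b then a else q.

Lemma swapfK (Q : eqType) (a b q : Q) : swapf a b (swapf a b q) = q.
Proof.
rewrite /swapf.
case: (q =P a) => [->|/eqP Ha].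
  rewrite eqxx; case: (b =P a) => [->//|/eqP Hb //].
case: (q =P b) => [Eb|/eqP Hb].
  by subst; rewrite eqxx.
by rewrite (negbTE Ha) (negbTE Hb).
Qed.

Definition smap (I Q : Type) (h : Q -> Q) (s : sin I Q) : sin I Q :=
  match s with SInt q => SInt I (h q) | SInit a => SInit Q a | SLost => SLost end.

Definition map_sin (n : nat) (I Q : Type) (g : 'I_n -> Q -> Q) (x : invec n I Q)
  : invec n I Q := [ffun j => smap (g j) (x j)].

Definition map_out (Q D : Type) (h : Q -> Q) (o : Q + D) : Q + D :=
  match o with inl q => inl (h q) | inr d => inr d end.

Fixpoint sig (n : nat) (I D Q : finType) (M0 M : machine n I D Q) (Sc : scenario n I)
  (t : nat) : 'I_n -> Q -> Q :=
  match t with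
  | 0 => fun _ q => q
  | t'.+1 => fun i =>
      let x := exec_input M Sc t'.+1 i in
      match M0 t'.+1 i (map_sin (sig M0 M Sc t') x), M t'.+1 i x with
      | inl a, inl b => swapf a b
      | _, _ => id
      end
  end.

Definition Mp (n : nat) (I D Q : finType) (M0 M : machine n I D Q) (Sc : scenario n I)
  : machine n I D Q :=
  fun t i x => map_out (sig M0 M Sc t i) (M0 t i (map_sin (sig M0 M Sc t.-1) x)).

Lemma sigK (n : nat) (I D Q : finType) (M0 M : machine n I D Q) Sc t j q :
  sig M0 M Sc t j (sig M0 M Sc t j q) = q.
Proof.
case: t => [//|t] /=.
case: (M0 t.+1 j _) => a //=; case: (M t.+1 j _) => b //=; exact: swapfK.
Qed.

Lemma map_sinK (n : nat) (I D Q : finType) (M0 M : machine n I D Q) Sc t (x : invec n I Q) :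
  map_sin (sig M0 M Sc t) (map_sin (sig M0 M Sc t) x) = x.
Proof.
apply/ffunP => j; rewrite !ffunE.
by case: (x j) => //= q; rewrite sigK.
Qed.

Lemma exec_Mp (n : nat) (I D Q : finType) (M0 M : machine n I D Q) Sc Sc' t i :
  exec_st (Mp M0 M Sc) Sc' t i = smap (sig M0 M Sc t i) (exec_st M0 Sc' t i).
Proof.
elim: t i => [//|t IH] i /=.
have -> : in_vec Sc' t.+1 (exec_st (Mp M0 M Sc) Sc' t) i =
          map_sin (sig M0 M Sc t) (in_vec Sc' t.+1 (exec_st M0 Sc' t) i).
  apply/ffunP => j; rewrite !ffunE IH.
  by case: (sc_loss Sc' j i t.+1).
rewrite /Mp map_sinK.
by case: (M0 t.+1 i (in_vec Sc' t.+1 (exec_st M0 Sc' t) i)).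
Qed.

Lemma Mp_correct (n r f : nat) (I D Q : finType) C (M0 M : machine n I D Q) Sc :
  correct r f C M0 -> correct r f C (Mp M0 M Sc).
Proof.
move=> [hv hc]; split.
  move=> t i x ht; have [h1 h2] := hv t i (map_sin (sig M0 M Sc t.-1) x) ht.
  split.
    by move=> /h1 [q hq]; exists (sig M0 M Sc t i q); rewrite /Mp hq.
  by move=> /h2 [d hd]; exists d; rewrite /Mp hd.
move=> Sc' hSc'; have [ds [hds hC]] := hc Sc' hSc'.
exists ds; split => // i.
rewrite /final_is /exec_input.
have -> : in_vec Sc' r (exec_st (Mp M0 M Sc) Sc' r.-1) i =
          map_sin (sig M0 M Sc r.-1) (in_vec Sc' r (exec_st M0 Sc' r.-1) i).
  apply/ffunP => j; rewrite !ffunE exec_Mp.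
  by case: (sc_loss Sc' j i r).
rewrite /Mp map_sinK.
have := hds i; rewrite /final_is /exec_input => ->; done.
Qed.

Lemma Mp_step (n r : nat) (I D Q : finType) (M0 M : machine n I D Q) Sc t i :
  valid_machine r M0 -> valid_machine r M -> t.+1 < r ->
  Mp M0 M Sc t.+1 i (exec_input M Sc t.+1 i) = M t.+1 i (exec_input M Sc t.+1 i).
Proof.
move=> hv0 hv ht.
have ht' : 1 <= t.+1 <= r by rewrite /= ltnW.
have [b hb] := (hv t.+1 i (exec_input M Sc t.+1 i) ht').1 ht.
have [a ha] := (hv0 t.+1 i (map_sin (sig M0 M Sc t) (exec_input M Sc t.+1 i)) ht').1 ht.
change (map_out (sig M0 M Sc t.+1 i) (M0 t.+1 i (map_sin (sig M0 M Sc t) (exec_input M Sc t.+1 i))) = M t.+1 i (exec_input M Sc t.+1 i)).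
rewrite ha hb /= ha hb /swapf eqxx //.
Qed.

Lemma exec_Mp_Sc (n r : nat) (I D Q : finType) (M0 M : machine n I D Q) Sc t :
  valid_machine r M0 -> valid_machine r M -> t < r ->
  forall i, exec_st (Mp M0 M Sc) Sc t i = exec_st M Sc t i.
Proof.
move=> hv0 hv; elim: t => [//|t IH] ht i /=.
have -> : in_vec Sc t.+1 (exec_st (Mp M0 M Sc) Sc t) i = exec_input M Sc t.+1 i.
  apply/ffunP => j; rewrite !ffunE IH //; exact: ltnW.
by rewrite (@Mp_step n r I D Q M0 M Sc t i hv0 hv ht).
Qed.

Theorem theorem2 (n r f : nat) (I D Q : finType)
    (C : scenario n I -> {ffun 'I_n -> D} -> Prop) :
  2 <= r ->
  feasible r f Q C ->
  forall (Sc : scenario n I) (ds : {ffun 'I_n -> D}),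
    consistent r f Sc ->
    definite_decision r f Q C Sc ds ->
  forall M : machine n I D Q,
    valid_machine r M ->
    (forall i, final_is r M Sc i (ds i)) ->
  forall T : transition n I D Q -> Prop,
    (forall tr, T tr -> applied r M Sc tr) ->
    (forall tr1 tr2, T tr1 -> T tr2 ->
       tr_round tr1 = tr_round tr2 -> tr_proc tr1 = tr_proc tr2 -> tr1 = tr2) ->
  exists M' : machine n I D Q,
    correct r f C M' /\
    (forall tr, T tr -> M' (tr_round tr) (tr_proc tr) (tr_input tr) = tr_output tr).
Proof.
move=> hr [M0 hM0] Sc ds hSc hdd M hv hfin T hT _.
have hc := Mp_correct M Sc hM0.
exists (Mp M0 M Sc); split => // tr /hT [/andP [h1 h2] hin hout].
rewrite -hout hin.
move: h1 h2; case: (tr_round tr) => [//|t] _.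
rewrite leq_eqVlt => /orP [/eqP ht|ht].
subst r; set i := tr_proc tr.
  have e : exec_input (Mp M0 M Sc) Sc t.+1 i = exec_input M Sc t.+1 i.
    rewrite /exec_input; apply/ffunP => j; rewrite !ffunE.
    by rewrite (@exec_Mp_Sc n t.+1 I D Q M0 M Sc t hM0.1 hv (ltnSn t)).
  have h1 := hdd _ hc i; have h2 := hfin i; rewrite /final_is in h1 h2.
  by rewrite h2 -h1 e.
exact: Mp_step hM0.1 hv ht.
Qed.
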